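(* Suppose the GIP bounds satisfy, for all $t>0$ and $v_j\in V$, $l_{j,t}\le l_{\min,0}w^t\le\mathbf h_0^T(\mathbf W^t)_{:,j}\le h_{j,t}$, where $l_{\min,0}=\min_j l_{j,0}$, $w=\min_{(i,j):W_{ij}>0}W_{ij}$, $\mathbf h_0=(h_{j,0})_j$ and $(\mathbf W^t)_{:,j}$ is the $j$-th column of $\mathbf W^t$. Let $\gamma\in[0,1)$ with $\gamma>1-1/\rho(\mathbf W)$, let $k\in\{1,\dots,n\}$, and let $\mathbf c=\big((\mathbf I-(1-\gamma)\mathbf W)^{-1}-\mathbf I\big)\mathbf 1$ (the Katz centrality with factor $1-\gamma$). Consider the problem $$\max_{\mathbf x,\mathbf z}\ s(\mathbf x)\quad\text{s.t. } l_{j,0}z_j\le x_j\le h_{j,0}z_j\ \forall j,\ \ \sum_j z_j\le k,\ \ x_j\in\mathbb R,\ z_j\in\{0,1\},$$ where $s(\mathbf x)=\sum_j\sum_{t=1}^\infty(1-\gamma)^t x_j(t)$ with $(\mathbf x(t))$ the GIP trajectory from $\mathbf x(0)=\mathbf x$. Let $\mathcal A\subseteq\{1,\dots,n\}$ with $|\mathcal A|=k$ be such that $h_{i,0}c_i\le h_{j,0}c_j$ for all $i\notin\mathcal A$, $j\in\mathcal A$. Then $x^*_j=h_{j,0}$, $z^*_j=1$ for $j\in\mathcal A$ and $x^*_j=0$, $z^*_j=0$ for $j\notin\mathcal A$ is an optimal solution, and in this regime $s(\mathbf x)=\mathbf c^T\mathbf x$ for every feasible $\mathbf x$.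
   Context: Let $G=(V,E)$ be a directed weighted network with node set $V=\{v_1,\dots,v_n\}$ and weighted adjacency matrix $\mathbf W=(W_{ij})$, where $W_{ij}>0$ if $(v_i,v_j)\in E$ and $W_{ij}=0$ otherwise. The general information propagation (GIP) model with lower bounds $\{l_{j,t}\}$ and upper bounds $\{h_{j,t}\}$ (real numbers with $0\le l_{j,t}\le h_{j,t}$ for all $t\ge 0$, $v_j\in V$, and $l_{j,0}>0$) is the deterministic discrete-time dynamics $$x_j(t)=f_{j,t}\Big(\sum_i W_{ij}x_i(t-1)\Big),\quad t>0,\ v_j\in V,$$ where $f_{j,t}(x)=0$ if $x<l_{j,t}$, $f_{j,t}(x)=x$ if $l_{j,t}\le x<h_{j,t}$, and $f_{j,t}(x)=h_{j,t}$ if $x\ge h_{j,t}$. An initial state $\mathbf x(0)=(x_j(0))$ is admissible if $x_j(0)\in\{0\}\cup[l_{j,0},h_{j,0}]$ for every $j$. $\mathbf 1$ is the all-ones vector, $\mathbf I$ the identity. *)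

(* Defs.v *)
From HB Require Import structures.
From mathcomp Require Import all_boot all_order all_algebra.
From mathcomp Require Import all_classical all_reals.
From mathcomp Require Import topology normedtype sequences.
From mathcomp Require Import complex.

Set Implicit Arguments.
Unset Strict Implicit.
Unset Printing Implicit Defensive.

Import Order.TTheory GRing.Theory Num.Theory.
Import numFieldNormedType.Exports.
Local Open Scope ring_scope.

Section GIP.
Variables (R : realType) (n : nat).

Definition gip_f (l h : R) (x : R) : R :=
  if x < l then 0 else if x < h then x else h.

(* GIP trajectory x(t) from the initial state x0; l t j = l_{j,t}, h t j = h_{j,t},
   W i j = W_{ij}. *)
Fixpoint gip_traj (W : 'M[R]_n) (l h : nat -> 'I_n -> R) (x0 : 'I_n -> R)
  (t : nat) : 'I_n -> R :=
  match t with
  | 0 => x0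
  | t'.+1 => fun j =>
      gip_f (l t'.+1 j) (h t'.+1 j) (\sum_i W i j * gip_traj W l h x0 t' i)
  end.

Definition gip_partial (W : 'M[R]_n) (l h : nat -> 'I_n -> R) (gamma : R)
  (x0 : 'I_n -> R) (j : 'I_n) (N : nat) : R :=
  \sum_(1 <= t < N) (1 - gamma) ^+ t * gip_traj W l h x0 t j.

Definition gip_score (W : 'M[R]_n) (l h : nat -> 'I_n -> R) (gamma : R)
  (x0 : 'I_n -> R) : R :=
  \sum_j limn (gip_partial W l h gamma x0 j).

(* w = min of the positive entries of W (= 0 if W has no positive entry). *)
Definition min_pos_weight (W : 'M[R]_n) : R :=
  \big[Num.min/(\big[Num.max/0]_(p : 'I_n * 'I_n) W p.1 p.2)]_(p : 'I_n * 'I_n | 0 < W p.1 p.2)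
     W p.1 p.2.

Definition is_spectral_radius (W : 'M[R]_n) (r : R) : Prop :=
  (exists2 lam : R[i], eigenvalue (map_mx (fun a => (a%:C)%C) W) lam & `|lam| = (r%:C)%C)
  /\ (forall lam : R[i], eigenvalue (map_mx (fun a => (a%:C)%C) W) lam -> `|lam| <= (r%:C)%C).

Definition katz (W : 'M[R]_n) (gamma : R) : 'I_n -> R :=
  fun j => ((invmx (1%:M - (1 - gamma) *: W) - 1%:M) *m (const_mx 1 : 'cV[R]_n)) j ord0.

Definition feasible (l h : nat -> 'I_n -> R) (k : nat) (x : 'I_n -> R)
  (z : 'I_n -> bool) : Prop :=
  (forall j, l 0%N j * (z j)%:R <= x j <= h 0%N j * (z j)%:R)
  /\ (\sum_j (z j : nat) <= k)%N.

End GIP.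

(* Main.v *)
Require Import Defs.
From HB Require Import structures.
From mathcomp Require Import all_boot all_order all_algebra.
From mathcomp Require Import all_classical all_reals.
From mathcomp Require Import topology normedtype sequences.
From mathcomp Require Import complex.
From mathcomp Require Import ring lra zify.
Import Order.TTheory GRing.Theory Num.Theory.
Import numFieldNormedType.Exports.
Import ComplexField.Normc.
Set Implicit Arguments.
Unset Strict Implicit.
Unset Printing Implicit Defensive.
Local Open Scope ring_scope.

Section Helpers.
Variable R : realType.

Definition vanish (u : nat -> R) :=
  forall e : R, 0 < e -> exists N0, forall N, (N0 <= N)%N -> `|u N| <= e.

Lemma vanish_ext (u v : nat -> R) : (forall N, u N = v N) -> vanish u -> vanish v.
Proof.
move=> E hu e e0; have [N0 H] := hu e e0; exists N0 => N HN; rewrite -E; exact: H.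
Qed.

Lemma vanish0 : vanish (fun=> 0).
Proof. by move=> e e0; exists 0%N => N _; rewrite normr0 ltW. Qed.

Lemma vanishD (u v : nat -> R) : vanish u -> vanish v -> vanish (fun N => u N + v N).
Proof.
move=> hu hv e e0; have e20 : 0 < e / 2 by rewrite divr_gt0.
have [N1 H1] := hu _ e20; have [N2 H2] := hv _ e20.
exists (maxn N1 N2) => N HN; apply: le_trans (ler_normD _ _) _.
rewrite [e]splitr lerD //.
  by apply: H1; apply: leq_trans HN; apply: leq_maxl.
by apply: H2; apply: leq_trans HN; apply: leq_maxr.
Qed.

Lemma vanishZ (c : R) (u : nat -> R) : vanish u -> vanish (fun N => c * u N).
Proof.
move=> hu e e0; have c1 : 0 < `|c| + 1 by rewrite ltr_wpDl.
have [N H] := hu (e / (`|c| + 1)) (divr_gt0 e0 c1).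
exists N => N' HN; rewrite normrM.
apply: le_trans (ler_wpM2l (normr_ge0 c) (H _ HN)) _.
rewrite mulrA ler_pdivrMr //; have := normr_ge0 c; nra.
Qed.

Lemma vanishN (u : nat -> R) : vanish u -> vanish (fun N => - u N).
Proof. move=> hu; apply: vanish_ext (vanishZ (-1) hu) => N; by rewrite mulN1r. Qed.

Lemma vanish_sum (I : finType) (F : I -> nat -> R) :
  (forall i, vanish (F i)) -> vanish (fun N => \sum_i F i N).
Proof.
move=> hF.
suff : forall s : seq I, vanish (fun N => \sum_(i <- s) F i N) by apply.
elim=> [|i s IH].
  by apply: vanish_ext vanish0 => N; rewrite big_nil.
by apply: vanish_ext (vanishD (hF i) IH) => N; rewrite big_cons.
Qed.

Lemma vanish_norm (u : nat -> R) : vanish (fun N => `|u N|) -> vanish u.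
Proof.
move=> hu e e0; have [N H] := hu e e0; exists N => N' HN; have := H _ HN.
by rewrite normr_id.
Qed.

Lemma decay (q : R) (u d : nat -> R) : 0 <= q -> q < 1 -> (forall N, 0 <= u N) ->
  (forall N, u N.+1 <= q * u N + d N) -> vanish d -> vanish u.
Proof.
move=> q0 q1 u0 hu hd e e0; have e20 : 0 < e / 2 by rewrite divr_gt0.
have q1' : 0 < 1 - q by rewrite subr_gt0.
have [N0 HN0] := hd (e / 2 * (1 - q)) (mulr_gt0 e20 q1').
have key : forall m, u (N0 + m)%N <= q ^+ m * u N0 + e / 2.
  elim=> [|m IH]; first by rewrite addn0 expr0 mul1r lerDl ltW.
  rewrite addnS; apply: le_trans (hu _) _.
  have hd' := le_trans (ler_norm _) (HN0 (N0 + m)%N (leq_addr _ _)).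
  have := ler_wpM2l q0 IH; rewrite exprS; nra.
have qn : `|q| < 1 by rewrite ger0_norm.
have := cvg_geometric (u N0) qn.
move=> /(@cvgrPdist_le _ _ _ _ _ _ _) /(_ (e / 2) e20) [M _ HM].
exists (N0 + M)%N => N HN.
have -> : N = (N0 + (N - N0))%N by rewrite subnKC // (leq_trans (leq_addr _ _) HN).
rewrite ger0_norm //; apply: le_trans (key _) _.
have : (M <= N - N0)%N by rewrite leq_subRL // (leq_trans (leq_addr _ _) HN).
move=> /HM /=; rewrite sub0r normrN /geometric.
move=> /(le_trans (ler_norm _)); rewrite mulrC; lra.
Qed.

Lemma vanish_cvg (u : nat -> R) (L : R) :
  vanish (fun N => u N - L) -> (u @ \oo --> L)%classic.
Proof.
move=> h; apply/cvgrPdist_le => e e0; have [N HN] := h e e0.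
by exists N => // n Hn /=; rewrite distrC; exact: HN.
Qed.

End Helpers.
Section Spectral.
Variable R : realType.

Definition vanishC (f : nat -> R[i]) := vanish (fun N => normc (f N)).

Lemma normc_ge0 (z : R[i]) : 0 <= normc z.
Proof. by case: z => a b; rewrite /normc sqrtr_ge0. Qed.

Lemma normc_real (x : R) : normc ((x%:C)%C : R[i]) = `|x|.
Proof. by rewrite /normc /= expr0n /= addr0 sqrtr_sqr. Qed.

Variable m : nat.

Lemma peel (M : 'M[R[i]]_m.+1) (c : R[i]) (s : seq R[i]) i j :
  (forall z, z \in s -> normc (c * z) < 1) ->
  vanishC (fun N => c ^+ N * ((\prod_(z <- s) (M - z%:M)) *m M ^+ N) i j) ->
  vanishC (fun N => c ^+ N * (M ^+ N) i j).
Proof.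
elim: s => [|z s IH] hs hv.
  by apply: vanish_ext hv => N; rewrite big_nil mul1mx.
apply: IH; first by move=> y ys; apply: hs; rewrite inE ys orbT.
set P := \prod_(y <- s) (M - y%:M).
have comm : P * M = M * P.
  apply/esym; apply: commr_prod => y _.
  by rewrite /GRing.comm mulrBr mulrBl -!mulmxE scalar_mxC.
set g := fun N => c ^+ N * (P *m M ^+ N) i j.
set h := fun N => c ^+ N * ((\prod_(z0 <- z :: s) (M - z0%:M)) *m M ^+ N) i j.
have rec : forall N, g N.+1 = (c * z) * g N + c * h N.
  move=> N; rewrite /g /h big_cons.
  have -> : (M - z%:M) * P *m M ^+ N = P *m M ^+ N.+1 - z *: (P *m M ^+ N).
    by rewrite -mul_scalar_mx !mulmxE exprS !mulrBl -comm !mulrA.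
  rewrite !mxE exprS; ring.
apply: (@decay _ (normc (c * z)) (fun N => normc (g N)) (fun N => normc (c * h N))).
- exact: normc_ge0.
- by apply: hs; rewrite inE eqxx.
- by move=> N; apply: normc_ge0.
- by move=> N; rewrite rec; apply: le_trans (le_normcD _ _) _; rewrite normcM.
- by apply: vanish_ext (vanishZ (normc c) hv) => N; rewrite [in RHS]normcM.
Qed.

Lemma seq_max_attained (s : seq R[i]) : s != [::] ->
  exists2 z, z \in s & \big[Num.max/0]_(y <- s) normc y = normc z.
Proof.
elim: s => [//|y s IH] _; rewrite big_cons.
have [->|sne] := eqVneq s [::].
  by exists y; rewrite ?inE ?eqxx // big_nil; apply/max_idPl; apply: normc_ge0.
have [z zs ->] := IH sne.
have [le|lt] := leP (normc y) (normc z).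
  by exists z; rewrite ?inE ?zs ?orbT //; apply/max_idPr.
by exists y; rewrite ?inE ?eqxx //; apply/max_idPl; apply: ltW.
Qed.

Lemma pow_vanish (W : 'M[R]_m.+1) (a : R) : 0 <= a ->
  (forall r, is_spectral_radius W r -> a * r < 1) ->
  forall i j, vanish (fun N => ((a *: W) ^+ N) i j).
Proof.
move=> a0 Hr i j.
pose M := map_mx (fun x : R => (x%:C)%C) W.
have [rs Hrs] := closed_field_poly_normal (char_poly M).
rewrite (monicP (char_poly_monic M)) scale1r in Hrs.
have Pzero : \prod_(z <- rs) (M - z%:M) = 0.
  have CH := Cayley_Hamilton M; rewrite Hrs rmorph_prod in CH.
  rewrite -CH; apply: eq_bigr => z _.
  by rewrite rmorphB /= horner_mx_X horner_mx_C.
have rsne : rs != [::].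
  apply/eqP => rs0; have := size_char_poly M.
  by rewrite Hrs rs0 big_nil size_poly1.
pose r := \big[Num.max/0]_(y <- rs) normc y.
have rle : forall z, z \in rs -> normc z <= r.
  by move=> z zs; apply: (le_bigmax_seq 0 z xpredT (fun y => normc y)).
have eigP : forall lam, eigenvalue M lam -> lam \in rs.
  by move=> lam; rewrite eigenvalue_root_char Hrs root_prod_XsubC.
have spec : is_spectral_radius W r.
  split.
    have [z zs zr] := seq_max_attained rsne.
    exists z; last by change (((normc z)%:C)%C = (r%:C)%C); rewrite -zr.
    by rewrite eigenvalue_root_char Hrs root_prod_XsubC.
  move=> lam /eigP ls; change (((normc lam)%:C)%C <= (r%:C)%C).
  by rewrite lecR; apply: rle.
have ar := Hr r spec.
have H1 : forall z, z \in rs -> normc ((a%:C)%C * z) < 1.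
  move=> z zs; rewrite normcM normc_real ger0_norm //.
  by apply: le_lt_trans ar; apply: ler_wpM2l => //; apply: rle.
have H2 : vanishC (fun N => (a%:C)%C ^+ N * ((\prod_(z <- rs) (M - z%:M)) *m M ^+ N) i j).
  apply: vanish_ext (@vanish0 R) => N.
  by rewrite Pzero mul0mx mxE mulr0 normc0.
have H3 := peel H1 H2.
apply: vanish_norm => e e0; have [N0 H] := H3 e e0.
exists N0 => N HN; have := H N HN.
have eM : M ^+ N = map_mx (fun x : R => (x%:C)%C) (W ^+ N) by rewrite rmorphXn.
have ea : ((a%:C)%C : R[i]) ^+ N = ((a ^+ N)%:C)%C by rewrite rmorphXn.
rewrite eM ea mxE.
have em : forall x y : R, ((x%:C)%C : R[i]) * (y%:C)%C = ((x * y)%:C)%C by move=> x y; rewrite rmorphM.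
rewrite em normc_real normr_id.
by rewrite exprZn mxE normr_id.
Qed.

End Spectral.
Section Gen.
Variable R : realType.

Lemma sum_pos_term (I : finType) (F : I -> R) :
  0 < \sum_i F i -> exists k, 0 < F k.
Proof.
move=> Hs; apply/not_existsP => /= Hn; move: Hs; apply/negP; rewrite -leNgt.
by rewrite sumr_le0 // => i _; rewrite leNgt; apply/negP; apply: Hn.
Qed.

Lemma term_le_sum (I : finType) (F : I -> R) k :
  (forall i, 0 <= F i) -> F k <= \sum_i F i.
Proof.
by move=> F0; rewrite (bigD1 k) //= lerDl sumr_ge0.
Qed.

Lemma gip_f_id (lo hi y : R) : 0 <= lo -> lo <= hi ->
  (y = 0 \/ (lo <= y /\ y <= hi)) -> gip_f lo hi y = y.
Proof.
rewrite /gip_f => l0 lh [->|[ly yh]].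
  case: ltP => // _; case: ltP => // h0.
  by apply/eqP; rewrite eq_le h0 (le_trans l0 lh).
rewrite ltNge ly /=; case: ltP => // hy.
by apply/eqP; rewrite eq_le hy yh.
Qed.

Lemma ge0_vanish (y : R) (u : nat -> R) : vanish u -> (forall N, 0 <= y - u N) -> 0 <= y.
Proof.
move=> hu hy; rewrite leNgt; apply/negP => y0.
have yp : 0 < - y / 2 by rewrite divr_gt0 // oppr_gt0.
have [N H] := hu (- y / 2) yp.
have := H N (leqnn N); rewrite ler_norml => /andP[h1 h2].
have := hy N; lra.
Qed.

Lemma vanish_const (c : R) : vanish (fun=> c) -> c = 0.
Proof.
move=> hc; apply/eqP; apply/negPn/negP => c0.
have cp : 0 < `|c| by rewrite normr_gt0.
have cp2 : 0 < `|c| / 2 by rewrite divr_gt0.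
have [N H] := hc (`|c| / 2) cp2.
have := H N (leqnn N); lra.
Qed.

Lemma vanishS (u : nat -> R) : vanish u -> vanish (fun N => u N.+1).
Proof. by move=> hu e e0; have [N H] := hu e e0; exists N => N' HN; apply: H; apply: leqW. Qed.

Lemma vanish_cvgS (u : nat -> R) (L : R) :
  vanish (fun N => u N.+1 - L) -> (u @ \oo --> L)%classic.
Proof.
move=> h; apply/cvgrPdist_le => e e0; have [N HN] := h e e0.
exists N.+1 => // -[|n] Hn //=; rewrite distrC; exact: HN.
Qed.

End Gen.
Section Mat.
Variables (R : realType) (m : nat).
Implicit Types (W B : 'M[R]_m.+1).

Lemma pow_ge0 W : (forall i j, 0 <= W i j) -> forall t i j, 0 <= (W ^+ t) i j.
Proof.
move=> W0; elim=> [|t IH] i j; first by rewrite expr0 mxE ler0n.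
rewrite exprSr -mulmxE mxE; apply: sumr_ge0 => k _; exact: mulr_ge0.
Qed.

Lemma w_ge0 W : (forall i j, 0 <= W i j) -> 0 <= min_pos_weight W.
Proof.
move=> W0; rewrite /min_pos_weight; apply: le_bigmin => [|p /ltW //].
apply: le_trans (W0 ord0 ord0) _.
exact: (le_bigmax 0 (fun p : 'I_m.+1 * 'I_m.+1 => W p.1 p.2) (ord0, ord0)).
Qed.

Lemma w_le W i j : 0 < W i j -> min_pos_weight W <= W i j.
Proof.
move=> Wp; rewrite /min_pos_weight.
exact: (bigmin_le_cond _ (j := (i, j)) (P := fun p : 'I_m.+1 * 'I_m.+1 => 0 < W p.1 p.2)
   (fun p => W p.1 p.2)).
Qed.

Lemma pow_pos W : (forall i j, 0 <= W i j) -> forall t i j,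
  0 < (W ^+ t) i j -> min_pos_weight W ^+ t <= (W ^+ t) i j.
Proof.
move=> W0; elim=> [|t IH] i j.
  by rewrite expr0 !mxE; case: (i == j) => //=; rewrite ltxx.
rewrite exprSr -mulmxE mxE => /sum_pos_term [k Hk].
have Pk : 0 < (W ^+ t) i k.
  rewrite lt0r pow_ge0 // andbT; apply/eqP => E; move: Hk; by rewrite E mul0r ltxx.
have Wk : 0 < W k j.
  rewrite lt0r W0 andbT; apply/eqP => E; move: Hk; by rewrite E mulr0 ltxx.
have T : (W ^+ t) i k * W k j <= \sum_k0 (W ^+ t) i k0 * W k0 j.
  apply: (@term_le_sum _ _ (fun k0 => (W ^+ t) i k0 * W k0 j) k).
  by move=> k0; apply: mulr_ge0 => //; apply: pow_ge0.
apply: le_trans T; rewrite exprSr; apply: ler_pM.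
- exact: exprn_ge0 (w_ge0 W0).
- exact: w_ge0.
- exact: IH.
- exact: w_le.
Qed.

Definition Ssum B N : 'M[R]_m.+1 := \sum_(1 <= t < N) B ^+ t.

Lemma Ssum_id B N : Ssum B N.+1 * (1 - B) = B - B ^+ N.+1.
Proof.
elim: N => [|N IH]; first by rewrite /Ssum big_geq // mul0r expr1 subrr.
rewrite /Ssum big_nat_recr //= -/(Ssum B N.+1) mulrDl IH.
by rewrite mulrBr mulr1 -exprSr addrA subrK.
Qed.

Lemma unit_IB B : (forall i j, vanish (fun N => (B ^+ N) i j)) -> (1%:M - B) \in unitmx.
Proof.
move=> Bv; rewrite -row_free_unit -kermx_eq0; apply/negPn/negP => Kn0.
set K := kermx (1%:M - B) in Kn0.
have [i0 Hi0] : exists i0, row i0 K != 0.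
  apply/not_existsP => /= Hn; move/negP: Kn0; apply; apply/eqP/row_matrixP => i.
  by rewrite row0; apply/eqP; apply/negPn/negP; apply: Hn.
set v := row i0 K in Hi0.
have vB : v *m B = v.
  have : v *m (1%:M - B) = 0 by rewrite /v -row_mul mulmx_ker row0.
  by rewrite mulmxBr mulmx1 => /eqP; rewrite subr_eq0 => /eqP <-.
have vBN : forall N, v *m B ^+ N = v.
  elim=> [|N IH]; first by rewrite expr0 mulmx1.
  by rewrite exprSr -mulmxE mulmxA IH.
move/negP: Hi0; apply; apply/eqP/rowP => k; rewrite [RHS]mxE.
apply: vanish_const; apply: (vanish_ext (u := fun N => \sum_i v 0 i * (B ^+ N) i k)).
  by move=> N; rewrite -[in RHS](vBN N) [in RHS]mxE.
by apply: vanish_sum => i; apply: vanishZ.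
Qed.

End Mat.
Section Main.
Variables (R : realType) (m : nat).

Lemma mxBE p q (A B : 'M[R]_(p, q)) i j : (A - B) i j = A i j - B i j.
Proof. by rewrite !mxE. Qed.

Lemma traj_lin (W : 'M[R]_m.+1) (l h : nat -> 'I_m.+1 -> R) (x : 'I_m.+1 -> R) :
  (forall i j, 0 <= W i j) ->
  (forall t j, 0 <= l t j <= h t j) ->
  (forall t j, (0 < t)%N ->
     let lmin0 := \big[Num.min/l 0%N j]_(i : 'I_m.+1) l 0%N i in
     l t j <= lmin0 * min_pos_weight W ^+ t
     /\ lmin0 * min_pos_weight W ^+ t <= \sum_i h 0%N i * (W ^+ t) i j
     /\ \sum_i h 0%N i * (W ^+ t) i j <= h t j) ->
  (forall i, x i = 0 \/ (l 0%N i <= x i /\ x i <= h 0%N i)) ->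
  forall t j, gip_traj W l h x t j = \sum_i x i * (W ^+ t) i j.
Proof.
move=> W0 lh Hreg hx; elim=> [|t IH] j.
  rewrite /= expr0 (bigD1 j) //= mxE eqxx mulr1 big1 ?addr0 // => i ij.
  by rewrite mxE (negbTE ij) mulr0.
have x0 : forall i, 0 <= x i.
  move=> i; case: (hx i) => [->|[h1 _]] //; apply: le_trans h1.
  by case/andP: (lh 0%N i).
have E : \sum_i W i j * gip_traj W l h x t i = \sum_i x i * (W ^+ t.+1) i j.
  under eq_bigr do rewrite IH.
  rewrite exprSr -mulmxE.
  under [RHS]eq_bigr do rewrite mxE big_distrr.
  rewrite exchange_big /=; apply: eq_bigr => i _; rewrite big_distrr /=.
  by apply: eq_bigr => k _; rewrite mulrCA [_ * W i j]mulrC.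
rewrite /= E; apply: gip_f_id; first by case/andP: (lh t.+1 j).
  by case/andP: (lh t.+1 j).
have [h1 [h2 h3]] := Hreg t.+1 j isT.
set y := \sum_i x i * (W ^+ t.+1) i j.
have y0 : 0 <= y by apply: sumr_ge0 => i _; apply: mulr_ge0 => //; apply: pow_ge0.
have yh : y <= h t.+1 j.
  apply: le_trans h3; apply: ler_sum => i _; apply: ler_wpM2r; first exact: pow_ge0.
  case: (hx i) => [->|[_ //]]; by case/andP: (lh 0%N i) => a b; apply: le_trans b.
case: (eqVneq y 0) => [->|yn0]; [by left|right; split => //].
have yp : 0 < y by rewrite lt0r yn0.
have [k Hk] := sum_pos_term yp.
have xk : x k != 0 by apply/eqP => E0; move: Hk; rewrite E0 mul0r ltxx.
have Wk : 0 < (W ^+ t.+1) k j.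
  rewrite lt0r pow_ge0 // andbT; apply/eqP => E0; move: Hk; by rewrite E0 mulr0 ltxx.
apply: le_trans h1 _.
have T : x k * (W ^+ t.+1) k j <= y.
  apply: (@term_le_sum _ _ (fun i => x i * (W ^+ t.+1) i j) k).
  by move=> i; apply: mulr_ge0 => //; apply: pow_ge0.
apply: le_trans T; apply: ler_pM.
- apply: le_bigmin => [|i _]; first by case/andP: (lh 0%N j).
  by case/andP: (lh 0%N i).
- exact: exprn_ge0 (w_ge0 W0).
- apply: le_trans (bigmin_le _ k (l 0%N)) _.
  by case: (hx k) => [E0|[]//]; move: xk; rewrite E0 eqxx.
- exact: pow_pos.
Qed.

Lemma partial_eq (W : 'M[R]_m.+1) (l h : nat -> 'I_m.+1 -> R) gamma x N :
  (forall t j, gip_traj W l h x t j = \sum_i x i * (W ^+ t) i j) ->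
  forall j, gip_partial W l h gamma x j N =
    \sum_i x i * (Ssum ((1 - gamma) *: W) N) i j.
Proof.
move=> Ht j; rewrite /gip_partial /Ssum.
under eq_bigr do rewrite Ht big_distrr.
rewrite exchange_big /=; apply: eq_bigr => i _.
rewrite summxE big_distrr /=; apply: eq_bigr => t _.
by rewrite exprZn mxE mulrCA.
Qed.

End Main.
Theorem theorem5_succ (R : realType) (m : nat) (W : 'M[R]_m.+1)
  (l h : nat -> 'I_m.+1 -> R) (gamma : R) (k : nat) (A : {set 'I_m.+1}) :
  (forall i j, 0 <= W i j) ->
  (forall t j, 0 <= l t j <= h t j) ->
  (forall j, 0 < l 0%N j) ->
  (forall t j, (0 < t)%N ->
     let lmin0 := \big[Num.min/l 0%N j]_(i : 'I_m.+1) l 0%N i in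
     l t j <= lmin0 * min_pos_weight W ^+ t
     /\ lmin0 * min_pos_weight W ^+ t <= \sum_i h 0%N i * (W ^+ t) i j
     /\ \sum_i h 0%N i * (W ^+ t) i j <= h t j) ->
  0 <= gamma -> gamma < 1 ->
  (forall r, is_spectral_radius W r -> (1 - gamma) * r < 1) ->
  (1 <= k <= m.+1)%N ->
  #|A| = k ->
  (forall i j, i \notin A -> j \in A ->
     h 0%N i * katz W gamma i <= h 0%N j * katz W gamma j) ->
  let xs := fun j => if j \in A then h 0%N j else 0 in
  let zs := fun j => j \in A in
  [/\ feasible l h k xs zs,
      (forall x z, feasible l h k x z ->
         gip_score W l h gamma x <= gip_score W l h gamma xs)
    & (forall x z, feasible l h k x z ->
         (forall j, cvgn (gip_partial W l h gamma x j))
         /\ gip_score W l h gamma x = \sum_j katz W gamma j * x j)].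
Proof.
move=> W0 lh l0 Hreg g0 g1 Hsp kn cardA Hopt xs zs.
have a0 : 0 <= 1 - gamma by rewrite subr_ge0 ltW.
have Bv := pow_vanish a0 Hsp.
set a := 1 - gamma in a0 Bv.
set B := a *: W in Bv.
have Bu : (1%:M - B) \in unitmx := unit_IB Bv.
set Q := invmx (1%:M - B).
have BQ : B *m Q = Q - 1%:M.
  have := mulmxV Bu; rewrite -/Q mulmxBl mul1mx => H.
  by rewrite -H opprB addrC subrK.
have katzE : forall i, katz W gamma i = \sum_j (B *m Q) i j.
  move=> i; rewrite /katz -/a -/B -/Q BQ mxE; apply: eq_bigr => j _.
  by rewrite [X in _ * X]mxE mulr1.
have Sge0 : forall N i j, 0 <= (Ssum B N) i j.
  move=> N i j; rewrite /Ssum summxE; apply: sumr_ge0 => t _.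
  rewrite /B exprZn mxE; apply: mulr_ge0; [exact: exprn_ge0|exact: pow_ge0].
have SQ : forall N, Ssum B N.+1 = B *m Q - B ^+ N.+1 *m Q.
  move=> N; rewrite -mulmxBl -(Ssum_id B N) mulmxE -mulrA.
  have -> : (1 - B) * Q = 1 by rewrite -mulmxE; exact: mulmxV.
  by rewrite mulr1.
have tailv : forall i j, vanish (fun N => (B ^+ N.+1 *m Q) i j).
  move=> i j; apply: (vanish_ext (u := fun N => \sum_k0 Q k0 j * (B ^+ N.+1) i k0)).
    by move=> N; rewrite mxE; apply: eq_bigr => k0 _; rewrite mulrC.
  by apply: vanish_sum => k0; apply: vanishZ; exact: (vanishS (Bv i k0)).
have BQge0 : forall i j, 0 <= (B *m Q) i j.
  move=> i j; apply: (ge0_vanish (tailv i j)) => N.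
  by rewrite -mxBE -SQ.
have katz0 : forall i, 0 <= katz W gamma i.
  by move=> i; rewrite katzE; apply: sumr_ge0.
have score : forall x z, feasible l h k x z ->
    (forall j, cvgn (gip_partial W l h gamma x j))
    /\ gip_score W l h gamma x = \sum_j katz W gamma j * x j.
  move=> x z [Hxz _].
  have hx : forall i, x i = 0 \/ (l 0%N i <= x i /\ x i <= h 0%N i).
    move=> i; have := Hxz i; case: (z i) => /=; rewrite ?mulr1n ?mulr0n ?mulr1 ?mulr0.
      by move=> /andP[p q]; right.
    by move=> /andP[p q]; left; apply/eqP; rewrite eq_le q p.
  have Ht := traj_lin W0 lh Hreg hx.
  pose L j := \sum_i x i * (B *m Q) i j.
  have cv : forall j, (gip_partial W l h gamma x j @ \oo --> L j)%classic.
    move=> j; apply: vanish_cvgS.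
    apply: (vanish_ext (u := fun N => - \sum_i x i * (B ^+ N.+1 *m Q) i j)).
      move=> N; rewrite (partial_eq gamma N.+1 Ht) -/a -/B SQ /L.
      rewrite [X in _ = X - _](eq_bigr (fun i => x i * (B *m Q) i j - x i * (B ^+ N.+1 *m Q) i j)); last by move=> i _; rewrite mxBE mulrBr.
      rewrite sumrB; lra.
    by apply: vanishN; apply: vanish_sum => i; apply: vanishZ.
  split.
    by move=> j; apply: (cvgP (L j)); exact: cv.
  rewrite /gip_score (eq_bigr L); last first.
    by move=> j _; apply: norm_cvg_lim; exact: cv.
  rewrite /L exchange_big /=; apply: eq_bigr => i _.
  by rewrite katzE mulr_suml; apply: eq_bigr => j _; rewrite mulrC.
have hge0 : forall j, 0 <= h 0%N j.
  by move=> j; case/andP: (lh 0%N j) => a1 b1; apply: le_trans b1.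
have cardsum : forall (P : {set 'I_m.+1}), (\sum_j ((j \in P) : nat))%N = #|P|.
  move=> P; rewrite -sum1_card [RHS]big_mkcond /=; apply: eq_bigr => j _.
  by case: (j \in P).
have feas : feasible l h k xs zs.
  split.
    move=> j; rewrite /xs /zs; case: (j \in A) => /=; rewrite ?mulr1n ?mulr0n ?mulr1 ?mulr0.
      by case/andP: (lh 0%N j) => _ ->; rewrite lexx.
    by rewrite lexx.
  by rewrite /zs cardsum cardA.
split => //.
move=> x z Hf.
have [_ ->] := score x z Hf; have [_ ->] := score xs zs feas.
pose v := fun j => h 0%N j * katz W gamma j.
have v0 : forall j, 0 <= v j by move=> j; apply: mulr_ge0.
pose S := [set j | z j].
case: Hf => Hxz HzS.
have step1 : \sum_j katz W gamma j * x j <= \sum_(j in S) v j.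
  rewrite [X in _ <= X]big_mkcond /=; apply: ler_sum => j _; rewrite inE /v.
  have := Hxz j; case: (z j) => /=; rewrite ?mulr1n ?mulr0n ?mulr1 ?mulr0 => /andP[p q].
    by rewrite [h _ _ * _]mulrC; apply: ler_wpM2l.
  have -> : x j = 0 by apply/eqP; rewrite eq_le q p.
  by rewrite mulr0.
have step2 : \sum_j katz W gamma j * xs j = \sum_(j in A) v j.
  rewrite [RHS]big_mkcond /=; apply: eq_bigr => j _; rewrite /xs /v.
  by case: (j \in A); [rewrite mulrC | rewrite mulr0].
rewrite step2; apply: le_trans step1 _.
pose th := \big[Num.max/0]_(i | i \notin A) v i.
have th0 : 0 <= th by apply: bigmax_ge_id.
have thA : forall j, j \in A -> th <= v j.
  by move=> j jA; apply: bigmax_le => [|i iA]; [exact: v0 | exact: Hopt].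
have thnA : forall i, i \notin A -> v i <= th.
  by move=> i iA; apply: (le_bigmax_cond _ (P := fun i => i \notin A) v).
have cS : (#|S| <= #|A|)%N.
  rewrite cardA -(cardsum S); apply: leq_trans HzS; rewrite leq_eqVlt; apply/orP; left.
  by apply/eqP; apply: eq_bigr => j _; rewrite inE.
have cD : (#|S :\: A| <= #|A :\: S|)%N.
  have := cardsID A S; have := cardsID S A; rewrite finset.setIC => h1 h2.
  by rewrite -(leq_add2l #|S :&: A|) h2 h1.
have e1 : \sum_(j in S) v j = \sum_(j in S :&: A) v j + \sum_(j in S :\: A) v j.
  exact: big_setID.
have e2 : \sum_(j in A) v j = \sum_(j in S :&: A) v j + \sum_(j in A :\: S) v j.
  by rewrite (big_setID S) finset.setIC.
rewrite e1 e2 lerD2l.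
have e3 : \sum_(j in S :\: A) v j <= \sum_(j in S :\: A) th.
  apply: ler_sum => j; rewrite !inE => /andP[jA _]; exact: thnA.
have e4 : \sum_(j in A :\: S) th <= \sum_(j in A :\: S) v j.
  apply: ler_sum => j; rewrite !inE => /andP[_ jA]; exact: thA.
apply: (le_trans e3); apply: (le_trans _ e4).
rewrite !sumr_const -[X in X <= _]mulr_natr -[X in _ <= X]mulr_natr.
apply: (ler_wpM2l th0); rewrite ler_nat; exact: cD.
Qed.


Unset Implicit Arguments.
Set Strict Implicit.

Theorem theorem5 (R : realType) (n : nat) (W : 'M[R]_n)
  (l h : nat -> 'I_n -> R) (gamma : R) (k : nat) (A : {set 'I_n}) :
  (* weighted network: W_ij > 0 on edges, 0 otherwise *)
  (forall i j, 0 <= W i j) ->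
  (* GIP bounds *)
  (forall t j, 0 <= l t j <= h t j) ->
  (forall j, 0 < l 0%N j) ->
  (* bound regime *)
  (forall t j, (0 < t)%N ->
     let lmin0 := \big[Num.min/l 0%N j]_(i : 'I_n) l 0%N i in
     l t j <= lmin0 * min_pos_weight W ^+ t
     /\ lmin0 * min_pos_weight W ^+ t <= \sum_i h 0%N i * (W ^+ t) i j
     /\ \sum_i h 0%N i * (W ^+ t) i j <= h t j) ->
  (* gamma in [0,1), gamma > 1 - 1/rho(W) *)
  0 <= gamma -> gamma < 1 ->
  (forall r, is_spectral_radius W r -> (1 - gamma) * r < 1) ->
  (* k in {1,...,n} *)
  (1 <= k <= n)%N ->
  #|A| = k ->
  (forall i j, i \notin A -> j \in A ->
     h 0%N i * katz W gamma i <= h 0%N j * katz W gamma j) ->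
  let xs := fun j => if j \in A then h 0%N j else 0 in
  let zs := fun j => j \in A in
  [/\ feasible l h k xs zs,
      (forall x z, feasible l h k x z ->
         gip_score W l h gamma x <= gip_score W l h gamma xs)
    & (forall x z, feasible l h k x z ->
         (forall j, cvgn (gip_partial W l h gamma x j))
         /\ gip_score W l h gamma x = \sum_j katz W gamma j * x j)].
Proof.
case: n W l h A => [|m] W l h A.
  move=> _ _ _ _ _ _ _ /andP[k1 k0]; exfalso.
  by have := leq_trans k1 k0.
exact: theorem5_succ.
Qed.
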